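(* Let $\kappa$ be a probability density on $\mathbb{R}^d$ with $|h_2(\kappa)|\le A_{\kappa,2}$, let $\theta\in(0,1)$, let $Z_1,\dots,Z_n\in\mathbb{R}^d$, and let $(a_1,\dots,a_n)$ be a probability vector with $a_i\ge\epsilon>0$ for all $i\in[n]$. Let $\tilde Z_n$ have density $\mu_{\tilde Z_n}=\frac1{\theta^d}\sum_{i=1}^n a_i\kappa_{\theta,Z_i}$, where $\kappa_{\theta,z}(x)=\kappa\left(\frac{x-z}{\theta}\right)$. Then \[ |h_2(\tilde Z_n)|\le A_{\kappa,2}+d\log\tfrac1\theta+2\log\tfrac1\epsilon. \]
   Context: $h_2(f)=-\log\int f^2$ is the second-order differential Rényi entropy; $h_2(\tilde Z_n)$ means $h_2(\mu_{\tilde Z_n})$. *)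

(* Defs.v *)
(* R^d is modelled as d.-tuple R with its canonical
   (product / Borel) sigma-algebra; the Lebesgue integral on R^d of a
   nonnegative function is defined as the iterated one-dimensional Lebesgue
   integral (equal to the d-dimensional Lebesgue integral by Tonelli). *)
From HB Require Import structures.
From mathcomp Require Import all_boot all_order all_algebra.
From mathcomp Require Import all_classical all_reals all_analysis.
Set Implicit Arguments. Unset Strict Implicit. Unset Printing Implicit Defensive.
Import Order.TTheory GRing.Theory Num.Theory.
Local Open Scope ring_scope.

Section Defs.
Variable R : realType.

Fixpoint iint (d : nat) : (d.-tuple R -> \bar R) -> \bar R :=
  match d return (d.-tuple R -> \bar R) -> \bar R with
  | 0 => fun f => f [tuple]
  | d'.+1 => fun f =>
      (\int[@lebesgue_measure R]_(x in [set: R])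
          iint (fun t : d'.-tuple R => f [tuple of x :: t]))%E
  end.

Definition is_density (d : nat) (f : d.-tuple R -> R) : Prop :=
  measurable_fun [set: d.-tuple R] f /\ (forall x, 0 <= f x) /\
  iint (fun x => (f x)%:E) = 1%E.

Definition h2 (d : nat) (f : d.-tuple R -> R) : \bar R :=
  (- lne (iint (fun x => (f x ^+ 2)%:E)))%E.

Definition kshift (d : nat) (kappa : d.-tuple R -> R) (theta : R)
  (z : d.-tuple R) : d.-tuple R -> R :=
  fun x => kappa [tuple (tnth x i - tnth z i) / theta | i < d].

Definition mix_density (d n : nat) (kappa : d.-tuple R -> R) (theta : R)
  (a : 'I_n -> R) (Z : 'I_n -> d.-tuple R) : d.-tuple R -> R :=
  fun x => theta ^- d * \sum_(i < n) a i * kshift kappa theta (Z i) x.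

End Defs.

(* Main.v *)
From HB Require Import structures.
Require Import Defs.
From mathcomp Require Import all_boot all_order all_algebra.
From mathcomp Require Import all_classical all_reals all_analysis.
From mathcomp Require Import measurable_realfun lebesgue_integral.
From mathcomp Require Import lra ring.
Import Order.TTheory GRing.Theory Num.Theory.
Set Implicit Arguments. Unset Strict Implicit. Unset Printing Implicit Defensive.
Local Open Scope ring_scope.

Section Aux.
Variable R : realType.
Local Open Scope ereal_scope.

Lemma iint_ge0 (d : nat) (f : d.-tuple R -> \bar R) :
  (forall x, 0 <= f x) -> 0 <= iint f.
Proof.
elim: d f => [|d IH] f f0 /=; first exact: f0.
by apply: integral_ge0 => x _; apply: IH.
Qed.

Lemma iint_meas (d : nat) : forall (dX : measure_display) (X : measurableType dX)
  (g : X * d.-tuple R -> \bar R),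
  measurable_fun setT g -> (forall p, 0 <= g p) ->
  measurable_fun setT (fun x => iint (fun t => g (x, t))).
Proof.
elim: d => [|d IH] dX X g mg g0 /=.
  apply: (measurableT_comp mg).
  exact: measurable_fun_pair.
pose g' := fun p : (X * R) * d.-tuple R => g (p.1.1, [tuple of p.1.2 :: p.2]).
have mg' : measurable_fun setT g'.
  apply: (measurableT_comp mg).
  apply: measurable_fun_pair.
    exact: (measurableT_comp measurable_fst measurable_fst).
  apply: measurable_cons; last exact: measurable_snd.
  exact: (measurableT_comp measurable_snd measurable_fst).
have := IH _ _ g' mg' (fun p => g0 _).
move=> mF.
have F0 : forall q : X * R, 0 <= iint (fun t => g' (q, t)).
  by move=> q; apply: iint_ge0 => t; exact: g0.
have := measurable_fun_fubini_tonelli_F (m2 := @lebesgue_measure R) _ mF F0.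
by [].
Qed.

End Aux.
Section Aff.
Variable R : realType.
Local Open Scope ereal_scope.
Local Open Scope classical_set_scope.

Lemma aff_meas (z t : R) : measurable_fun setT (fun y : R => (y - z) / t)%R.
Proof.
apply: measurable_funM; last exact: measurable_cst.
apply: measurable_funD; first exact: measurable_id.
exact: measurable_cst.
Qed.

Lemma aff_preimage (z t a b : R) : (0 < t)%R ->
  (fun y : R => (y - z) / t)%R @^-1` `]a, b]%classic = `](t * a + z)%R, (t * b + z)%R]%classic.
Proof.
move=> t0; apply/seteqP; split => y /=; rewrite !in_itv /=;
  rewrite ltr_pdivlMr // ler_pdivrMr //; move=> /andP[h1 h2]; apply/andP; split; lra.
Qed.

Lemma aff_leb (z t : R) (t0 : (0 < t)%R) (A : set R) : measurable A ->
  lebesgue_measure ((fun y : R => (y - z) / t)%R @^-1` A) =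
  t%:E * lebesgue_measure A.
Proof.
move=> mA.
have kt : (0 <= t^-1)%R by rewrite invr_ge0 ltW.
have mphi : @measurable_fun _ _ (measurableTypeR R) (measurableTypeR R) setT
    (fun y : R => (y - z) / t)%R := aff_meas z t.
pose PF := measure_function_pushforward__canonical__measure_function_Measure
  (@lebesgue_measure R) mphi.
have Hoc : forall X, ocitv X -> lebesgue_measure X = mscale (NngNum kt) PF X.
  move=> _ [[a b] _ <-].
  rewrite /mscale /= /pushforward aff_preimage // !lebesgue_measure_itv /= !lte_fin.
  have -> : (t * a + z < t * b + z)%R = (a < b)%R by rewrite ltrD2r ltr_pM2l.
  case: ifP => _; last by rewrite mule0.
  rewrite -!EFinD -EFinM; congr EFin; field; exact: lt0r_neq0.
rewrite (@lebesgue_measure_unique R (mscale (NngNum kt) PF) Hoc A mA) /mscale /=.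
by rewrite muleA -EFinM mulfV ?mul1e // lt0r_neq0.
Qed.

Lemma int_aff (z t : R) (t0 : (0 < t)%R) (G : R -> \bar R) :
  measurable_fun setT G -> (forall y, 0 <= G y) ->
  \int[@lebesgue_measure R]_(y in [set: R]) G ((y - z) / t)%R =
  t%:E * \int[@lebesgue_measure R]_(y in [set: R]) G y.
Proof.
move=> mG G0.
have mphi : @measurable_fun _ _ (measurableTypeR R) (measurableTypeR R) setT
    (fun y : R => (y - z) / t)%R := aff_meas z t.
have mG' : @measurable_fun _ _ (measurableTypeR R) _ setT G := mG.
have := ge0_integral_pushforward mphi (@lebesgue_measure R) measurableT mG'
  (fun y _ => G0 y).
rewrite preimage_setT => <-.
have tge0 : (0 <= t)%R by rewrite ltW.
rewrite -(ge0_integral_mscale (@lebesgue_measure R) measurableT (NngNum tge0) mG'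
  (fun y _ => G0 y)).
apply: eq_measure_integral => A mA _ /=.
by rewrite /mscale /= /pushforward aff_leb.
Qed.

End Aff.

Section Iint.
Variable R : realType.
Local Open Scope ereal_scope.
Local Open Scope classical_set_scope.

Lemma sec_meas (d : nat) (f : (d.+1).-tuple R -> \bar R) (y : R) :
  measurable_fun setT f -> measurable_fun setT (fun t : d.-tuple R => f [tuple of y :: t]).
Proof.
move=> mf; apply: (measurableT_comp mf).
apply: measurable_cons; [exact: measurable_cst | exact: measurable_id].
Qed.

Lemma secint_meas (d : nat) (f : (d.+1).-tuple R -> \bar R) :
  measurable_fun setT f -> (forall x, 0 <= f x) ->
  @measurable_fun _ _ (measurableTypeR R) _ setT
    (fun y : R => iint (fun t : d.-tuple R => f [tuple of y :: t])).
Proof.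
move=> mf f0.
pose g := fun p : R * d.-tuple R => f [tuple of p.1 :: p.2].
have mg : measurable_fun setT g.
  apply: (measurableT_comp mf).
  apply: measurable_cons; [exact: measurable_fst | exact: measurable_snd].
have H := @iint_meas R d _ _ g mg (fun p => f0 _).
exact H.
Qed.

Lemma iint0 (d : nat) : iint (fun _ : d.-tuple R => 0) = 0.
Proof.
elim: d => [|d IH] //=.
under eq_integral do rewrite IH.
exact: integral0.
Qed.

Lemma iintD (d : nat) (f g : d.-tuple R -> \bar R) :
  measurable_fun setT f -> measurable_fun setT g ->
  (forall x, 0 <= f x) -> (forall x, 0 <= g x) ->
  iint (fun x => f x + g x) = iint f + iint g.
Proof.
elim: d f g => [|d IH] f g mf mg f0 g0 //=.
rewrite -ge0_integralD //; last 4 first.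
- by move=> y _; apply: iint_ge0.
- exact: secint_meas.
- by move=> y _; apply: iint_ge0.
- exact: secint_meas.
apply: eq_integral => y _.
by rewrite IH //; apply: sec_meas.
Qed.

Lemma iint_sum (d : nat) (I : Type) (s : seq I) (F : I -> d.-tuple R -> \bar R) :
  (forall i, measurable_fun setT (F i)) -> (forall i x, 0 <= F i x) ->
  iint (fun x => \sum_(i <- s) F i x) = \sum_(i <- s) iint (F i).
Proof.
move=> mF F0; elim: s => [|h s IH].
  have -> : (fun x => \sum_(i <- [::]) F i x) = (fun _ => 0).
    by apply: funext => x; rewrite big_nil.
  by rewrite big_nil iint0.
have -> : (fun x => \sum_(i <- h :: s) F i x) = (fun x => F h x + \sum_(i <- s) F i x).
  by apply: funext => x; rewrite big_cons.
rewrite big_cons -IH iintD //.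
- exact: emeasurable_sum.
- by move=> x; apply: sume_ge0 => i _.
Qed.

Lemma iintZ (d : nat) (k : R) (f : d.-tuple R -> \bar R) : (0 <= k)%R ->
  measurable_fun setT f -> (forall x, 0 <= f x) ->
  iint (fun x => k%:E * f x) = k%:E * iint f.
Proof.
elim: d f => [|d IH] f k0 mf f0 //=.
have mS := secint_meas mf f0.
have S0 : forall y, [set: R] y -> 0 <= iint (fun t : d.-tuple R => f [tuple of y :: t]).
  by move=> y _; apply: iint_ge0.
have k0' : (0 <= k%:E) by rewrite lee_fin.
etransitivity; last exact: (ge0_integralZl _ measurableT mS S0 k0').
apply: eq_integral => y _.
by rewrite IH //; apply: sec_meas.
Qed.

Lemma iint_le (d : nat) (f g : d.-tuple R -> \bar R) :
  measurable_fun setT f -> measurable_fun setT g ->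
  (forall x, 0 <= f x) -> (forall x, f x <= g x) ->
  iint f <= iint g.
Proof.
elim: d f g => [|d IH] f g mf mg f0 fg //=.
have g0 : forall x, 0 <= g x by move=> x; exact: le_trans (f0 x) (fg x).
apply: ge0_le_integral => //.
- by move=> y _; apply: iint_ge0.
- exact: secint_meas.
- exact: secint_meas.
move=> y _; apply: IH => //; exact: sec_meas.
Qed.

Lemma aff_tuple_cons d (y : R) (s : d.-tuple R) (z : (d.+1).-tuple R) (t : R) :
  [tuple (tnth [tuple of y :: s] i - tnth z i) / t | i < d.+1]%R =
  [tuple of ((y - thead z) / t)%R ::
     [tuple (tnth s i - tnth [tuple of behead z] i) / t | i < d]%R].
Proof.
apply: eq_from_tnth => i; etransitivity; first exact: tnth_mktuple.
case: (unliftP ord0 i) => [j ->|->].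
  rewrite !tnthS; etransitivity; last (symmetry; exact: tnth_mktuple).
  by rewrite {1}(tuple_eta z) tnthS.
by [].
Qed.

Lemma iint_aff (d : nat) (t : R) (t0 : (0 < t)%R) : forall (z : d.-tuple R)
  (f : d.-tuple R -> \bar R),
  measurable_fun setT f -> (forall x, 0 <= f x) ->
  iint (fun x => f [tuple (tnth x i - tnth z i) / t | i < d]%R) =
  (t ^+ d)%:E * iint f.
Proof.
elim: d => [|d IH] z f mf f0 /=.
  by rewrite expr0 mul1e; congr f; exact: tuple0.
have E : forall y, iint (fun s : d.-tuple R =>
    f [tuple (tnth [tuple of y :: s] i - tnth z i) / t | i < d.+1]%R) =
    (t ^+ d)%:E * iint (fun s => f [tuple of ((y - thead z) / t)%R :: s]).
  move=> y.
  have -> : (fun s : d.-tuple R =>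
      f [tuple (tnth [tuple of y :: s] i - tnth z i) / t | i < d.+1]%R) =
    (fun s => (fun u : d.-tuple R => f [tuple of ((y - thead z) / t)%R :: u])
       [tuple (tnth s i - tnth [tuple of behead z] i) / t | i < d]%R).
    by apply: funext => s; rewrite aff_tuple_cons.
  apply: IH => //; exact: sec_meas.
under eq_integral => y _ do rewrite E.
pose G := fun u : R => iint (fun s : d.-tuple R => f [tuple of u :: s]).
have mG := secint_meas mf f0.
have G0 : forall u, 0 <= G u by move=> u; apply: iint_ge0.
have mGa : @measurable_fun _ _ (measurableTypeR R) _ setT
    (fun y : R => G ((y - thead z) / t)%R).
  exact: (measurableT_comp mG (aff_meas (thead z) t)).
have k0' : (0 <= (t ^+ d)%:E) by rewrite lee_fin exprn_ge0 // ltW.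
rewrite (ge0_integralZl _ measurableT mGa (fun y _ => G0 _) k0').
rewrite (@int_aff R (thead z) t t0 G mG G0).
by rewrite muleA -EFinM exprSr.
Qed.

End Iint.

Lemma jensen_sq (R : realType) (n : nat) (a v : 'I_n -> R) :
  (forall i, 0 <= a i) -> \sum_i a i = 1 ->
  (\sum_i a i * v i) ^+ 2 <= \sum_i a i * v i ^+ 2.
Proof.
move=> a0 sa; set m := \sum_i a i * v i.
have H : 0 <= \sum_i a i * (v i - m) ^+ 2.
  by apply: sumr_ge0 => i _; rewrite mulr_ge0 // sqr_ge0.
have E : \sum_i a i * (v i - m) ^+ 2 = \sum_i a i * v i ^+ 2 - m ^+ 2.
  transitivity (\sum_i (a i * v i ^+ 2 - (2 * m) * (a i * v i) + m ^+ 2 * a i)).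
    by apply: eq_bigr => i _; ring.
  rewrite big_split /= sumrB -!mulr_sumr sa -/m; ring.
by rewrite -subr_ge0 -E.
Qed.

Unset Implicit Arguments.
Set Strict Implicit.
Theorem lemma24 (R : realType) (d n : nat) (kappa : d.-tuple R -> R)
  (A theta eps : R) (a : 'I_n -> R) (Z : 'I_n -> d.-tuple R) :
  is_density kappa ->
  (`| h2 kappa | <= A%:E)%E ->
  0 < theta < 1 ->
  0 < eps ->
  \sum_(i < n) a i = 1 ->
  (forall i, eps <= a i) ->
  (`| h2 (mix_density kappa theta a Z) |
     <= (A + d%:R * ln (theta^-1) + 2 * ln (eps^-1))%:E)%E.
Proof.
move=> [mk [k0 _]] hA /andP[t0 t1] e0 suma ea.
have a0 : forall i, 0 <= a i by move=> i; exact: le_trans (ltW e0) (ea i).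
case: n a Z suma ea a0 => [|n] a Z suma ea a0.
  by move: suma; rewrite big_ord0 => /eqP; rewrite eq_sym oner_eq0.
pose j0 : 'I_n.+1 := ord0.
have e1 : eps <= 1.
  apply: (le_trans (ea j0)); rewrite -suma (bigD1 j0) //= lerDl.
  by apply: sumr_ge0 => i _.
set K := iint (fun x => (kappa x ^+ 2)%:E).
have K0 : (0 <= K)%E by apply: iint_ge0 => x; rewrite lee_fin sqr_ge0.
have [k [kpos Kk hk]] : exists k, [/\ 0 < k, K = k%:E & `|ln k| <= A].
  move: hA; rewrite /h2 -/K.
  case: K K0 => [k| |] //= K0'.
    case: ifP => hk0; first by [].
    move=> hA; exists k; split => //; first by rewrite ltNge hk0.
    by move: hA; rewrite -EFinN abse_EFin lee_fin normrN.
have mk2 : measurable_fun setT (fun x : d.-tuple R => (kappa x ^+ 2)%:E).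
  by apply/measurable_EFinP; apply: measurable_funX.
have msh : forall z : d.-tuple R, measurable_fun setT
    (fun x : d.-tuple R => [tuple (tnth x i - tnth z i) / theta | i < d]).
  move=> z; apply/measurable_fun_tnthP => i.
  rewrite (_ : _ \o _ = (fun x : d.-tuple R => (tnth x i - tnth z i) / theta)).
    exact: (measurableT_comp (aff_meas _ _) (measurable_tnth i)).
  by apply: funext => x /=; exact: tnth_mktuple.
have mks : forall i, measurable_fun setT (kshift kappa theta (Z i)).
  by move=> i; exact: (measurableT_comp mk (msh (Z i))).
pose G := fun i x => (kshift kappa theta (Z i) x ^+ 2)%:E.
have mG : forall i, measurable_fun setT (G i).
  by move=> i; apply/measurable_EFinP; apply: measurable_funX.
have G0 : forall i x, (0%R <= G i x)%E by move=> i x; rewrite lee_fin sqr_ge0.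
have iG : forall i, iint (G i) = ((theta ^+ d) * k)%:E.
  move=> i; rewrite EFinM -Kk.
  by apply: (iint_aff t0 (Z i) mk2) => x; rewrite lee_fin sqr_ge0.
set mix := mix_density kappa theta a Z.
have ks0 : forall i x, 0 <= kshift kappa theta (Z i) x by move=> i x; exact: k0.
have mmix : measurable_fun setT mix.
  rewrite /mix /mix_density; apply: measurable_funM; first exact: measurable_cst.
  apply: measurable_sum => i; apply: measurable_funM => //; exact: measurable_cst.
pose M := fun x => (mix x ^+ 2)%:E.
have mM : measurable_fun setT M.
  by apply/measurable_EFinP; apply: measurable_funX.
have M0 : forall x, (0%R <= M x)%E by move=> x; rewrite lee_fin sqr_ge0.
have td0 : 0 < theta ^+ d by rewrite exprn_gt0.
pose c := (theta ^- d) ^+ 2.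
have c0 : 0 <= c by rewrite sqr_ge0.
have up : (iint M <= ((theta ^- d) * k)%:E)%E.
  have mS : forall i, measurable_fun setT (fun x => ((c * a i)%:E * G i x)%E).
    by move=> i; apply: measurable_funeM.
  have S0 : forall i x, (0%R <= (c * a i)%:E * G i x)%E.
    by move=> i x; rewrite mule_ge0 // lee_fin mulr_ge0.
  apply: (@le_trans _ _ (iint (fun x => \sum_(i < n.+1) ((c * a i)%:E * G i x)%E))).
    apply: iint_le => //; first exact: emeasurable_sum.
    move=> x; rewrite /M /G.
    under eq_bigr do rewrite -EFinM.
    rewrite sumEFin lee_fin /mix /mix_density.
    apply: (@le_trans _ _ (c * \sum_i a i * kshift kappa theta (Z i) x ^+ 2)).
      by rewrite exprMn ler_wpM2l //; exact: jensen_sq.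
    rewrite mulr_sumr le_eqVlt; apply/orP; left; apply/eqP.
    by apply: eq_bigr => i _; rewrite mulrA.
  rewrite iint_sum //.
  have E : forall i, iint (fun x => ((c * a i)%:E * G i x)%E) =
      ((c * a i) * (theta ^+ d * k))%:E.
    move=> i; have cai : 0 <= c * a i by rewrite mulr_ge0.
    by rewrite (iintZ cai (mG i) (G0 i)) iG -EFinM.
  rewrite (eq_bigr _ (fun i _ => E i)).
  rewrite sumEFin lee_fin -mulr_suml -mulr_sumr suma mulr1 /c le_eqVlt; apply/orP; left; apply/eqP.
  field; exact: lt0r_neq0.
have lo : ((c * eps ^+ 2 * (theta ^+ d * k))%:E <= iint M)%E.
  rewrite EFinM -(iG j0) -iintZ //; last by rewrite mulr_ge0 // sqr_ge0.
  apply: iint_le => //.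
  - by apply: measurable_funeM.
  - by move=> x; rewrite mule_ge0 // lee_fin mulr_ge0 // sqr_ge0.
  move=> x; rewrite /M /G -EFinM lee_fin /mix /mix_density /c.
  rewrite -!exprMn; rewrite !expr2; apply: ler_pM.
  - by rewrite mulr_ge0 ?mulr_ge0 ?invr_ge0 ?exprn_ge0 // ltW.
  - by rewrite mulr_ge0 ?mulr_ge0 ?invr_ge0 ?exprn_ge0 // ltW.
  - rewrite -mulrA ler_wpM2l ?invr_ge0 ?exprn_ge0 ?(ltW t0) //.
    rewrite (bigD1 j0) //= (@le_trans _ _ (a j0 * kshift kappa theta (Z j0) x)) //.
      by rewrite ler_wpM2r.
    by rewrite lerDl sumr_ge0 // => i _; rewrite mulr_ge0.
  - rewrite -mulrA ler_wpM2l ?invr_ge0 ?exprn_ge0 ?(ltW t0) //.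
    rewrite (bigD1 j0) //= (@le_trans _ _ (a j0 * kshift kappa theta (Z j0) x)) //.
      by rewrite ler_wpM2r.
    by rewrite lerDl sumr_ge0 // => i _; rewrite mulr_ge0.
have I0 : (0%R <= iint M)%E by apply: iint_ge0.
have lpE : c * eps ^+ 2 * (theta ^+ d * k) = theta ^- d * eps ^+ 2 * k.
  rewrite /c; field; exact: lt0r_neq0.
rewrite lpE in lo.
have lp0 : 0 < theta ^- d * eps ^+ 2 * k.
  by rewrite !mulr_gt0 ?invr_gt0 ?exprn_gt0.
have up0 : 0 < theta ^- d * k by rewrite !mulr_gt0 ?invr_gt0 ?exprn_gt0.
rewrite /h2 -/M.
move: I0 up lo; case: (iint M) => [i| |] //= I0' up' lo'.
rewrite lee_fin in up'; rewrite lee_fin in lo'.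
have i0 : 0 < i by exact: lt_le_trans lp0 lo'.
have -> : (i <= 0) = false by apply/negbTE; rewrite -ltNge.
rewrite -EFinN abse_EFin lee_fin normrN.
have h1 : ln i <= ln (theta ^- d * k) by rewrite ler_ln ?posrE.
have h2 : ln (theta ^- d * eps ^+ 2 * k) <= ln i by rewrite ler_ln ?posrE.
set L := ln theta^-1; set Ee := ln eps^-1.
have L0 : 0 <= L by apply: ln_ge0; rewrite invf_ge1 // ltW.
have Ee0 : 0 <= Ee by apply: ln_ge0; rewrite invf_ge1.
have dL0 : 0 <= d%:R * L by rewrite mulr_ge0.
have hup : ln (theta ^- d * k) = d%:R * L + ln k.
  rewrite lnM ?posrE ?invr_gt0 ?exprn_gt0 // -exprVn lnXn ?invr_gt0 //.
  by rewrite /L mulr_natl.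
have EeE : Ee = - ln eps.
  apply/eqP; rewrite -addr_eq0 /Ee -lnM ?posrE ?invr_gt0 //.
  by rewrite mulVf ?ln1 // lt0r_neq0.
have hlo : ln (theta ^- d * eps ^+ 2 * k) = d%:R * L + 2 * ln eps + ln k.
  rewrite lnM ?posrE ?mulr_gt0 ?invr_gt0 ?exprn_gt0 //.
  rewrite lnM ?posrE ?invr_gt0 ?exprn_gt0 // -exprVn lnXn ?invr_gt0 //.
  rewrite lnXn //.
  have ee1 : ln theta^-1 *+ d = d%:R * L by rewrite /L mulr_natl.
  have ee2 : ln eps *+ 2 = 2 * ln eps by rewrite mulr_natl.
  by rewrite ee1 ee2.
  by rewrite invr_gt0.
rewrite hup in h1; rewrite hlo in h2.
move: hk; rewrite !ler_norml => /andP[hk1 hk2].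
apply/andP; split; lra.
Qed.
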